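(* Identify $\operatorname{Pic}(\mathcal{X}_n)$ with the standard $D_5^{(1)}$ Picard lattice via the preliminary basis change $\mathcal{H}_f=2\mathcal{H}_x+\mathcal{H}_y-\mathcal{F}_{1356}$, $\mathcal{H}_g=\mathcal{H}_x$, $\mathcal{E}_1=\mathcal{H}_x-\mathcal{F}_1$, $\mathcal{E}_2=\mathcal{F}_2$, $\mathcal{E}_3=\mathcal{H}_x-\mathcal{F}_3$, $\mathcal{E}_4=\mathcal{F}_4$, $\mathcal{E}_5=\mathcal{H}_x-\mathcal{F}_6$, $\mathcal{E}_6=\mathcal{H}_x-\mathcal{F}_5$, $\mathcal{E}_7=\mathcal{F}_7$, $\mathcal{E}_8=\mathcal{F}_8$. Under this identification the standard surface roots $\delta_i$ coincide with the surface roots of $\mathcal{X}_n$, the standard symmetry roots become $\alpha_0=\mathcal{F}_1-\mathcal{F}_2$, $\alpha_1=\mathcal{H}_y-\mathcal{F}_{13}$, $\alpha_2=\mathcal{F}_3-\mathcal{F}_4$, $\alpha_3=2\mathcal{H}_x+\mathcal{H}_y-\mathcal{F}_{135678}$, and the map $\varphi_*$ acts on them as the translation $$(\alpha_0,\alpha_1,\alpha_2,\alpha_3)\mapsto(\alpha_0,\alpha_1-\delta,\alpha_2,\alpha_3+\delta),\qquad \delta=-\mathcal{K}_{\mathcal{X}}.$$ Moreover, on the Picard lattice, $\varphi_*=\sigma_3\sigma_2w_1w_2w_0w_1$, hence $\varphi_*=w_1\circ\phi_*\circ w_1$ where $\phi_*=\sigma_3\sigma_2w_3w_1w_2w_0$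 is the standard translation $(\alpha_0,\alpha_1,\alpha_2,\alpha_3)\mapsto(\alpha_0-\delta,\alpha_1+\delta,\alpha_2-\delta,\alpha_3+\delta)$.
   Context: Standard $D_5^{(1)}$ Picard lattice: generators $\mathcal{H}_f,\mathcal{H}_g,\mathcal{E}_1,\dots,\mathcal{E}_8$ with $\mathcal{H}_f\cdot\mathcal{H}_g=1$, $\mathcal{H}_f^2=\mathcal{H}_g^2=0$, $\mathcal{H}\cdot\mathcal{E}_i=0$, $\mathcal{E}_i\cdot\mathcal{E}_j=-\delta_{ij}$. Standard surface roots: $\delta_0=\mathcal{E}_1-\mathcal{E}_2$, $\delta_1=\mathcal{E}_3-\mathcal{E}_4$, $\delta_2=\mathcal{H}_f-\mathcal{E}_1-\mathcal{E}_3$, $\delta_3=\mathcal{H}_g-\mathcal{E}_5-\mathcal{E}_7$, $\delta_4=\mathcal{E}_5-\mathcal{E}_6$, $\delta_5=\mathcal{E}_7-\mathcal{E}_8$. Standard symmetry roots ($A_3^{(1)}$, cyclic diagram $\alpha_0-\alpha_1-\alpha_2-\alpha_3-\alpha_0$): $\alpha_0=\mathcal{H}_g-\mathcal{E}_1-\mathcal{E}_2$, $\alpha_1=\mathcal{H}_f-\mathcal{E}_5-\mathcal{E}_6$, $\alpha_2=\mathcal{H}_g-\mathcal{E}_3-\mathcal{E}_4$, $\alpha_3=\mathcal{H}_f-\mathcal{E}_7-\mathcal{E}_8$; $\delta=\alpha_0+\alpha_1+\alpha_2+\alpha_3=2\mathcal{H}_f+2\mathcal{H}_g-\sum\mathcal{E}_i$.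 Reflections $w_j(\mathcal{C})=\mathcal{C}+(\mathcal{C}\cdot\alpha_j)\alpha_j$, and for a root $r$ write $w_r(\mathcal{C})=\mathcal{C}+(\mathcal{C}\cdot r)r$; $\sigma_2=w_{\mathcal{E}_1-\mathcal{E}_3}\circ w_{\mathcal{E}_2-\mathcal{E}_4}$, $\sigma_3=w_{\mathcal{E}_5-\mathcal{E}_7}\circ w_{\mathcal{E}_6-\mathcal{E}_8}$. $\mathcal{X}_n$, its Picard lattice ($\mathcal{H}_x,\mathcal{H}_y,\mathcal{F}_1,\dots,\mathcal{F}_8$), its surface roots $\delta_0=\mathcal{H}_x-\mathcal{F}_1-\mathcal{F}_2$, $\delta_1=\mathcal{H}_x-\mathcal{F}_3-\mathcal{F}_4$, $\delta_2=\mathcal{H}_y-\mathcal{F}_5-\mathcal{F}_6$, $\delta_3=\mathcal{F}_6-\mathcal{F}_7$, $\delta_4=\mathcal{F}_5-\mathcal{F}_6$, $\delta_5=\mathcal{F}_7-\mathcal{F}_8$, and $\varphi_*$ are as follows: $\mathcal{X}_n$ is $\mathbb{P}^1\times\mathbb{P}^1$ blown up at $q_1(x=0,y=n)$, $q_2(x=0,y=n+\beta)$, $q_3(1/x=0,y=0)$, $q_4(1/x=0,y=-\alpha)$ and a cascade $q_5\leftarrow q_6\leftarrow q_7\leftarrow q_8$ over $(x=1/s,y=\infty)$; $\varphi_*$ is the pushforward of the forward map of the recurrence $x_nx_{n+1}=\frac{y_n^2-(2n+\beta)y_n+n(n+\beta)}{s^2(y_n^2+\alpha y_n)}$, $y_n+y_{n-1}=-\frac{\alpha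 s^2x_n^2+s(2n-1-\alpha+\beta+s)x_n-2n-\beta+1}{(1-sx_n)^2}$, given by $\mathcal{H}_x\mapsto5\mathcal{H}_x+2\mathcal{H}_y-\mathcal{F}_{1234}-2\mathcal{F}_{5678}$, $\mathcal{H}_y\mapsto2\mathcal{H}_x+\mathcal{H}_y-\mathcal{F}_{5678}$, $\mathcal{F}_1\mapsto2\mathcal{H}_x+\mathcal{H}_y-\mathcal{F}_{25678}$, $\mathcal{F}_2\mapsto2\mathcal{H}_x+\mathcal{H}_y-\mathcal{F}_{15678}$, $\mathcal{F}_3\mapsto2\mathcal{H}_x+\mathcal{H}_y-\mathcal{F}_{45678}$, $\mathcal{F}_4\mapsto2\mathcal{H}_x+\mathcal{H}_y-\mathcal{F}_{35678}$, $\mathcal{F}_5\mapsto\mathcal{H}_x-\mathcal{F}_8$, $\mathcal{F}_6\mapsto\mathcal{H}_x-\mathcal{F}_7$, $\mathcal{F}_7\mapsto\mathcal{H}_x-\mathcal{F}_6$, $\mathcal{F}_8\mapsto\mathcal{H}_x-\mathcal{F}_5$ (image classes on $\mathcal{X}_{n+1}$). Notation $\mathcal{F}_{i\cdots j}$ = sum of the listed $\mathcal{F}$'s. *)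

(* Defs.v *)
From Stdlib Require Import ZArith.
Open Scope Z_scope.

(* An element of a rank-10 Picard lattice, written in a fixed basis
   (B0, B1, B2, ..., B9).  For Pic(X_n) the basis is
   (H_x, H_y, F_1, ..., F_8); for the standard D_5^(1) lattice it is
   (H_f, H_g, E_1, ..., E_8). *)
Record V := mkV { c0 : Z; c1 : Z; c2 : Z; c3 : Z; c4 : Z;
                  c5 : Z; c6 : Z; c7 : Z; c8 : Z; c9 : Z }.

Definition vzero : V := mkV 0 0 0 0 0 0 0 0 0 0.
Definition vadd (u v : V) : V :=
  mkV (c0 u + c0 v) (c1 u + c1 v) (c2 u + c2 v) (c3 u + c3 v) (c4 u + c4 v)
      (c5 u + c5 v) (c6 u + c6 v) (c7 u + c7 v) (c8 u + c8 v) (c9 u + c9 v).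
Definition vscale (a : Z) (v : V) : V :=
  mkV (a * c0 v) (a * c1 v) (a * c2 v) (a * c3 v) (a * c4 v)
      (a * c5 v) (a * c6 v) (a * c7 v) (a * c8 v) (a * c9 v).
Definition vopp (v : V) : V := vscale (-1) v.
Definition vsub (u v : V) : V := vadd u (vopp v).

Infix "+v" := vadd (at level 50, left associativity).
Infix "-v" := vsub (at level 50, left associativity).
Infix "*v" := vscale (at level 40, left associativity).

Definition dot (u v : V) : Z :=
  c0 u * c1 v + c1 u * c0 v
  - (c2 u * c2 v + c3 u * c3 v + c4 u * c4 v + c5 u * c5 v
     + c6 u * c6 v + c7 u * c7 v + c8 u * c8 v + c9 u * c9 v).

Definition eH1 : V := mkV 1 0 0 0 0 0 0 0 0 0.
Definition eH2 : V := mkV 0 1 0 0 0 0 0 0 0 0.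
Definition bit (i k : nat) : Z := if Nat.eqb i k then 1 else 0.
(* eE i = i-th exceptional class, 1 <= i <= 8 *)
Definition eE (i : nat) : V :=
  mkV 0 0 (bit i 1) (bit i 2) (bit i 3) (bit i 4)
      (bit i 5) (bit i 6) (bit i 7) (bit i 8).

Definition linmap (a0 a1 a2 a3 a4 a5 a6 a7 a8 a9 : V) (v : V) : V :=
  c0 v *v a0 +v c1 v *v a1 +v c2 v *v a2 +v c3 v *v a3 +v c4 v *v a4
  +v c5 v *v a5 +v c6 v *v a6 +v c7 v *v a7 +v c8 v *v a8 +v c9 v *v a9.

Definition refl (r : V) (C : V) : V := C +v (dot C r) *v r.

Definition Hx : V := eH1.
Definition Hy : V := eH2.
Definition F (i : nat) : V := eE i.

Definition KX : V :=
  vopp ((2 *v Hx) +v (2 *v Hy) -v F 1 -v F 2 -v F 3 -v F 4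
        -v F 5 -v F 6 -v F 7 -v F 8).

Definition deltaX (i : nat) : V :=
  match i with
  | 0%nat => Hx -v F 1 -v F 2
  | 1%nat => Hx -v F 3 -v F 4
  | 2%nat => Hy -v F 5 -v F 6
  | 3%nat => F 6 -v F 7
  | 4%nat => F 5 -v F 6
  | _ => F 7 -v F 8
  end.

(* phi_* : Pic(X_n) -> Pic(X_{n+1}) (both written in the basis H_x,H_y,F_i) *)
Definition phiX : V -> V :=
  linmap
    ((5 *v Hx) +v (2 *v Hy) -v F 1 -v F 2 -v F 3 -v F 4
       -v 2 *v F 5 -v 2 *v F 6 -v 2 *v F 7 -v 2 *v F 8)
    ((2 *v Hx) +v Hy -v F 5 -v F 6 -v F 7 -v F 8)
    ((2 *v Hx) +v Hy -v F 2 -v F 5 -v F 6 -v F 7 -v F 8)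
    ((2 *v Hx) +v Hy -v F 1 -v F 5 -v F 6 -v F 7 -v F 8)
    ((2 *v Hx) +v Hy -v F 4 -v F 5 -v F 6 -v F 7 -v F 8)
    ((2 *v Hx) +v Hy -v F 3 -v F 5 -v F 6 -v F 7 -v F 8)
    (Hx -v F 8)
    (Hx -v F 7)
    (Hx -v F 6)
    (Hx -v F 5).

Definition Hf : V := eH1.
Definition Hg : V := eH2.
Definition E (i : nat) : V := eE i.

Definition deltaStd (i : nat) : V :=
  match i with
  | 0%nat => E 1 -v E 2
  | 1%nat => E 3 -v E 4
  | 2%nat => Hf -v E 1 -v E 3
  | 3%nat => Hg -v E 5 -v E 7
  | 4%nat => E 5 -v E 6
  | _ => E 7 -v E 8
  end.

Definition alphaStd (j : nat) : V :=
  match j with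
  | 0%nat => Hg -v E 1 -v E 2
  | 1%nat => Hf -v E 5 -v E 6
  | 2%nat => Hg -v E 3 -v E 4
  | _ => Hf -v E 7 -v E 8
  end.

Definition deltaS : V :=
  alphaStd 0 +v alphaStd 1 +v alphaStd 2 +v alphaStd 3.

Definition w (j : nat) : V -> V := refl (alphaStd j).
Definition sigma2 (C : V) : V := refl (E 1 -v E 3) (refl (E 2 -v E 4) C).
Definition sigma3 (C : V) : V := refl (E 5 -v E 7) (refl (E 6 -v E 8) C).

Definition phiStd (C : V) : V := sigma3 (sigma2 (w 1 (w 2 (w 0 (w 1 C))))).
Definition tStd (C : V) : V := sigma3 (sigma2 (w 3 (w 1 (w 2 (w 0 C))))).

Definition iota : V -> V :=
  linmap
    ((2 *v Hx) +v Hy -v F 1 -v F 3 -v F 5 -v F 6)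
    Hx
    (Hx -v F 1)
    (F 2)
    (Hx -v F 3)
    (F 4)
    (Hx -v F 6)
    (Hx -v F 5)
    (F 7)
    (F 8).

(* Main.v *)
Require Import Defs.
From Stdlib Require Import ZArith Lia.
Open Scope Z_scope.
Definition mat (f : V -> V) : V -> V :=
  linmap (f eH1) (f eH2) (f (eE 1)) (f (eE 2)) (f (eE 3)) (f (eE 4)) (f (eE 5)) (f (eE 6)) (f (eE 7)) (f (eE 8)).
Definition islin (f : V -> V) := forall v, f v = mat f v.
Ltac un := cbv [mat linmap dot refl eE eH1 eH2 bit vadd vsub vopp vscale Nat.eqb c0 c1 c2 c3 c4 c5 c6 c7 c8 c9].
Lemma refl_lin r : islin (refl r).
Proof. intro v; destruct r, v; un; f_equal; ring. Qed.
Lemma lin_add f u v : islin f -> f (u +v v) = f u +v f v.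
Proof. intro H; rewrite !H. destruct u, v; un; f_equal; ring. Qed.
Lemma lin_scale f k u : islin f -> f (k *v u) = k *v f u.
Proof. intro H; rewrite !H. destruct u; un; f_equal; ring. Qed.
Lemma comp_lin f g : islin f -> islin g -> islin (fun v => g (f v)).
Proof. intros Hf Hg v. rewrite Hf. unfold mat at 1, linmap.
 rewrite !(lin_add g) by exact Hg. rewrite !(lin_scale g) by exact Hg.
 unfold mat at 1. destruct v; reflexivity. Qed.
Lemma iota_lin : islin iota.
Proof. intro v; destruct v; cbv [iota]; un; f_equal; ring. Qed.
Lemma phiX_lin : islin phiX.
Proof. intro v; destruct v; cbv [phiX Hx Hy F]; un; f_equal; ring. Qed.
Lemma w_lin j : islin (w j).
Proof. apply refl_lin. Qed.
Lemma sigma2_lin : islin sigma2.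
Proof. exact (comp_lin _ _ (refl_lin _) (refl_lin _)). Qed.
Lemma sigma3_lin : islin sigma3.
Proof. exact (comp_lin _ _ (refl_lin _) (refl_lin _)). Qed.
Lemma phiStd_lin : islin phiStd.
Proof. exact (comp_lin _ sigma3 (comp_lin _ sigma2 (comp_lin _ (w 1) (comp_lin _ (w 2)
  (comp_lin (w 1) (w 0) (w_lin 1) (w_lin 0)) (w_lin 2)) (w_lin 1)) sigma2_lin) sigma3_lin). Qed.
Lemma tStd_lin : islin tStd.
Proof. exact (comp_lin _ sigma3 (comp_lin _ sigma2 (comp_lin _ (w 3) (comp_lin _ (w 1)
  (comp_lin (w 0) (w 2) (w_lin 0) (w_lin 2)) (w_lin 1)) (w_lin 3)) sigma2_lin) sigma3_lin). Qed.
Lemma w1_lin : islin (w 1).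
Proof. apply refl_lin. Qed.
Lemma eq_lin f g : islin f -> islin g -> mat f = mat g -> forall v, f v = g v.
Proof. intros Hf Hg E v. rewrite Hf, Hg, E. reflexivity. Qed.
Lemma linmap_ext a0 a1 a2 a3 a4 a5 a6 a7 a8 a9 b0 b1 b2 b3 b4 b5 b6 b7 b8 b9 :
  a0 = b0 -> a1 = b1 -> a2 = b2 -> a3 = b3 -> a4 = b4 -> a5 = b5 -> a6 = b6 -> a7 = b7 -> a8 = b8 -> a9 = b9 ->
  linmap a0 a1 a2 a3 a4 a5 a6 a7 a8 a9 = linmap b0 b1 b2 b3 b4 b5 b6 b7 b8 b9.
Proof. intros; subst; reflexivity. Qed.
Ltac cmat := unfold mat; apply linmap_ext; vm_compute; reflexivity.
Definition iinvD := (linmap Hg (Hf +v (2 *v Hg) -v E 1 -v E 3 -v E 5 -v E 6)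
    (Hg -v E 1) (E 2) (Hg -v E 3) (E 4) (Hg -v E 6) (Hg -v E 5) (E 7) (E 8)).
Lemma iinv_lin : islin iinvD.
Proof. unfold iinvD. intro v; destruct v; cbv [Hf Hg E]; un; f_equal; ring. Qed.
Ltac rsolve := vm_compute; reflexivity.

Theorem mainTheorem4 :
  (forall u v : V, dot (iota u) (iota v) = dot u v) /\
  (exists iinv : V -> V,
      (forall v, iota (iinv v) = v) /\ (forall v, iinv (iota v) = v)) /\
  (forall i : nat, (i <= 5)%nat -> iota (deltaStd i) = deltaX i) /\
  iota (alphaStd 0) = F 1 -v F 2 /\
  iota (alphaStd 1) = Hy -v F 1 -v F 3 /\
  iota (alphaStd 2) = F 3 -v F 4 /\
  iota (alphaStd 3) =
    (2 *v Hx) +v Hy -v F 1 -v F 3 -v F 5 -v F 6 -v F 7 -v F 8 /\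
  iota deltaS = vopp KX /\
  phiX (iota (alphaStd 0)) = iota (alphaStd 0) /\
  phiX (iota (alphaStd 1)) = iota (alphaStd 1) -v vopp KX /\
  phiX (iota (alphaStd 2)) = iota (alphaStd 2) /\
  phiX (iota (alphaStd 3)) = iota (alphaStd 3) +v vopp KX /\
  (forall C : V, phiX (iota C) = iota (phiStd C)) /\
  (forall C : V, phiStd C = w 1 (tStd (w 1 C))) /\
  tStd (alphaStd 0) = alphaStd 0 -v deltaS /\
  tStd (alphaStd 1) = alphaStd 1 +v deltaS /\
  tStd (alphaStd 2) = alphaStd 2 -v deltaS /\
  tStd (alphaStd 3) = alphaStd 3 +v deltaS.
Proof.
  split.
  { intros u v. rewrite (iota_lin u), (iota_lin v). destruct u, v. cbv [iota Hx Hy F]; un. ring. }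
  split.
  { exists iinvD; split.
    - apply (eq_lin (fun v => iota (iinvD v)) (fun v => v)).
      + exact (comp_lin _ _ iinv_lin iota_lin).
      + intro v; destruct v; un; f_equal; ring.
      + cmat.
    - apply (eq_lin (fun v => iinvD (iota v)) (fun v => v)).
      + exact (comp_lin _ _ iota_lin iinv_lin).
      + intro v; destruct v; un; f_equal; ring.
      + cmat. }
  split.
  { intros i Hi. do 6 (destruct i as [|i]; [rsolve|]). lia. }
  do 9 (split; [rsolve|]).
  split.
  { apply (eq_lin (fun v => phiX (iota v)) (fun v => iota (phiStd v))).
    - exact (comp_lin _ _ iota_lin phiX_lin).
    - exact (comp_lin _ _ phiStd_lin iota_lin).
    - cmat. }
  split.
  { apply (eq_lin phiStd (fun v => w 1 (tStd (w 1 v)))).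
    - apply phiStd_lin.
    - exact (comp_lin _ (w 1) (comp_lin (w 1) tStd w1_lin tStd_lin) w1_lin).
    - cmat. }
  repeat split; rsolve.
Qed.
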